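(* Let $\mathbf{a},\mathbf{b}\in\mathbb{R}^m$ satisfy $\mathcal{U}^{\mathbf{a},\mathbf{b}}\neq\emptyset$, let $\mathrm{h}^{\mathbf{a},\mathbf{b}}$ be an $\ell$-MRC for $\mathcal{U}^{\mathbf{a},\mathbf{b}}$, and let $\underline{R}^{\,\mathbf{a},\mathbf{b}}_{\ell}$ be the maximum value of the linear program $$\max_{\boldsymbol{\mu},\boldsymbol{\eta},\nu}\ \tfrac{1}{2}(\mathbf{b}+\mathbf{a})^{\mathrm{T}}\boldsymbol{\mu}-\tfrac{1}{2}(\mathbf{b}-\mathbf{a})^{\mathrm{T}}\boldsymbol{\eta}+\nu\ \text{ s.t. } \Phi(x,y)^{\mathrm{T}}\boldsymbol{\mu}+\nu\leq \ell(\mathrm{h}^{\mathbf{a},\mathbf{b}},(x,y))\ \forall x\in\mathcal{X},y\in\mathcal{Y},\ \boldsymbol{\eta}+\boldsymbol{\mu}\succeq\mathbf{0},\ \boldsymbol{\eta}-\boldsymbol{\mu}\succeq\mathbf{0}.$$ If $\mathrm{p}^*\in\mathcal{U}^{\mathbf{a},\mathbf{b}}$, then $$\underline{R}^{\,\mathbf{a},\mathbf{b}}_{\ell}\leq R_\ell(\mathrm{h}^{\mathbf{a},\mathbf{b}})\leq H_\ell(\mathcal{U}^{\mathbf{a},\mathbf{b}}).$$ In addition, $R_\ell(\mathrm{h}^{\mathbf{a},\mathbf{b}})=H_\ell(\mathcal{U}^{\mathbf{a},\mathbf{b}})$ if $\mathrm{p}^*$ maximizes the $\ell$-entropy over $\mathcal{U}^{\mathbf{a},\mathbf{b}}$,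 and $R_\ell(\mathrm{h}^{\mathbf{a},\mathbf{b}})=\underline{R}^{\,\mathbf{a},\mathbf{b}}_{\ell}$ if $\mathrm{p}^*$ minimizes the expected $\ell$-loss of $\mathrm{h}^{\mathbf{a},\mathbf{b}}$ over $\mathcal{U}^{\mathbf{a},\mathbf{b}}$.
   Context: Let $\mathcal{X},\mathcal{Y}$ be finite nonempty sets, $\mathcal{Y}=\{1,\dots,|\mathcal{Y}|\}$; $\Delta(\mathcal{Z})$ is the set of probability distributions on a finite set $\mathcal{Z}$. A classification rule $\mathrm{h}$ assigns to each $x$ a distribution $\mathrm{h}(\cdot|x)\in\Delta(\mathcal{Y})$; $\mathrm{T}(\mathcal{X},\mathcal{Y})$ is the set of such rules. A score function $L:\Delta(\mathcal{Y})\times\mathcal{Y}\to(-\infty,\infty]$ is lower semi-continuous and convex in its first argument; $\ell(\mathrm{h},(x,y))=L(\mathrm{h}(\cdot|x),y)$, $\ell(\mathrm{h},\mathrm{p})=\sum_{x,y}\mathrm{p}(x,y)\ell(\mathrm{h},(x,y))$. $H_\ell(\mathrm{p})=\min_{\mathrm{h}}\ell(\mathrm{h},\mathrm{p})$, $H_\ell(\mathcal{U})=\max_{\mathrm{p}\in\mathcal{U}}H_\ell(\mathrm{p})$; an $\ell$-MRC for convex compact $\mathcal{U}$ is a minimizer over $\mathrm{T}(\mathcal{X},\mathcal{Y})$ of $\max_{\mathrm{p}\in\mathcal{U}}\ell(\mathrm{h},\mathrm{p})$. $\mathrm{p}^*$ is the true underlying distribution and $R_\ell(\mathrm{h})=\ell(\mathrm{h},\mathrm{p}^*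 )$. $\Phi:\mathcal{X}\times\mathcal{Y}\to\mathbb{R}^m$ is a feature mapping, $\preceq,\succeq$ are componentwise, and $\mathcal{U}^{\mathbf{a},\mathbf{b}}=\{\mathrm{p}\in\Delta(\mathcal{X}\times\mathcal{Y}):\mathbf{a}\preceq\mathbb{E}_{\mathrm{p}}\{\Phi(x,y)\}\preceq\mathbf{b}\}$. *)

(* Defs.v *)
From HB Require Import structures.
From mathcomp Require Import all_boot all_order all_algebra.
From mathcomp Require Import boolp classical_sets reals ereal.
Set Implicit Arguments. Unset Strict Implicit. Unset Printing Implicit Defensive.
Import Order.TTheory GRing.Theory Num.Theory.
Local Open Scope classical_set_scope.
Local Open Scope ring_scope.

Definition is_dist (R : realType) (Z : finType) (p : Z -> R) : Prop :=
  (forall z, 0 <= p z) /\ \sum_(z : Z) p z = 1.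

Definition is_rule (R : realType) (X Y : finType) (h : X -> Y -> R) : Prop :=
  forall x, is_dist (h x).

(* Score function L : Delta(Y) x Y -> (-oo, +oo], lower semicontinuous and
   convex in its first argument (only values on Delta(Y) matter). *)
Definition score_function (R : realType) (Y : finType)
  (L : (Y -> R) -> Y -> \bar R) : Prop :=
  (forall q y, is_dist q -> L q y != -oo%E) /\
  (* lower semicontinuity on Delta(Y) (sup-norm topology of R^Y) *)
  (forall y q, is_dist q -> forall t : R, (t%:E < L q y)%E ->
     exists2 d : R, 0 < d & forall q', is_dist q' ->
       (forall y', `|q' y' - q y'| < d) -> (t%:E < L q' y)%E) /\
  (forall y q1 q2 (t : R), is_dist q1 -> is_dist q2 -> 0 <= t <= 1 ->
     (L (fun y' => (t * q1 y' + (1 - t) * q2 y')%R) y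
       <= t%:E * L q1 y + (1 - t)%R%:E * L q2 y)%E).

(* ell(h, p) = sum_{x,y} p(x,y) L(h(.|x), y)   (with 0 * +oo = 0) *)
Definition ell (R : realType) (X Y : finType) (L : (Y -> R) -> Y -> \bar R)
  (h : X -> Y -> R) (p : X * Y -> R) : \bar R :=
  (\sum_(z : X * Y) (p z)%:E * L (h z.1) z.2)%E.

(* l-entropy H_l(p) = min_h ell(h,p) (rendered as inf over T(X,Y)) *)
Definition Hent (R : realType) (X Y : finType) (L : (Y -> R) -> Y -> \bar R)
  (p : X * Y -> R) : \bar R :=
  ereal_inf [set ell L h p | h in [set h : X -> Y -> R | is_rule h]].

(* H_l(U) = max_{p in U} H_l(p) (rendered as sup) *)
Definition HentU (R : realType) (X Y : finType) (L : (Y -> R) -> Y -> \bar R)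
  (U : set (X * Y -> R)) : \bar R :=
  ereal_sup [set Hent L p | p in U].

Definition worst (R : realType) (X Y : finType) (L : (Y -> R) -> Y -> \bar R)
  (U : set (X * Y -> R)) (h : X -> Y -> R) : \bar R :=
  ereal_sup [set ell L h p | p in U].

Definition is_MRC (R : realType) (X Y : finType) (L : (Y -> R) -> Y -> \bar R)
  (U : set (X * Y -> R)) (h : X -> Y -> R) : Prop :=
  is_rule h /\ forall h', is_rule h' -> (worst L U h <= worst L U h')%E.

Definition Uab (R : realType) (X Y : finType) (m : nat)
  (Phi : X -> Y -> 'I_m -> R) (a b : 'I_m -> R) : set (X * Y -> R) :=
  [set p | is_dist p /\
     forall i, a i <= \sum_(z : X * Y) p z * Phi z.1 z.2 i <= b i].

Definition lp_feasible (R : realType) (X Y : finType) (m : nat)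
  (Phi : X -> Y -> 'I_m -> R) (L : (Y -> R) -> Y -> \bar R)
  (h : X -> Y -> R) (mu eta : 'I_m -> R) (nu : R) : Prop :=
  (forall x y, ((\sum_(i < m) Phi x y i * mu i + nu)%:E <= L (h x) y)%E) /\
  (forall i, 0 <= eta i + mu i /\ 0 <= eta i - mu i).

Definition lp_obj (R : realType) (m : nat) (a b mu eta : 'I_m -> R) (nu : R)
  : R :=
  2^-1 * (\sum_(i < m) (b i + a i) * mu i)
  - 2^-1 * (\sum_(i < m) (b i - a i) * eta i) + nu.

Definition is_lp_max (R : realType) (X Y : finType) (m : nat)
  (Phi : X -> Y -> 'I_m -> R) (L : (Y -> R) -> Y -> \bar R)
  (h : X -> Y -> R) (a b : 'I_m -> R) (v : R) : Prop :=
  (exists mu eta nu, lp_feasible Phi L h mu eta nu /\ lp_obj a b mu eta nu = v)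
  /\ (forall mu eta nu, lp_feasible Phi L h mu eta nu -> lp_obj a b mu eta nu <= v).

(* Main.v *)
Require Import Defs.
From HB Require Import structures.
From mathcomp Require Import all_boot all_order all_algebra.
From mathcomp Require Import boolp classical_sets reals ereal.
From mathcomp Require Import topology normedtype.
From mathcomp Require Import ring lra.
Import numFieldTopology.Exports.
Import Order.TTheory GRing.Theory Num.Theory.
Local Open Scope classical_set_scope.
Local Open Scope ring_scope.

Section LB.

Lemma nbhs_box (R : realType) (Y : finType) (q0 : Y -> R) (d : R) : 0 < d ->
  nbhs (q0 : {ptws Y -> R}) [set f : {ptws Y -> R} | forall y', `|f y' - q0 y'| < d].
Proof.
move=> d0.
apply: (@filter_forall _ Y (fun y' (f : {ptws Y -> R}) => `|f y' - q0 y'| < d) (nbhs (q0 : {ptws Y -> R})) _) => y'.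
have H := @proj_continuous Y (fun _ => R) y' q0.
apply: (H [set r | `|r - q0 y'| < d]).
apply/nbhs_ballP; exists d => //= r.
move=> /= H1; move: H1; by rewrite /ball /= /mathcomp_extra.proj distrC.
Qed.

Lemma dist_le1 (R : realType) (Z : finType) (p : Z -> R) z : is_dist p -> p z <= 1.
Proof.
case=> p0 p1; rewrite -p1 (bigD1 z) //= lerDl; exact: sumr_ge0.
Qed.

Lemma L_lb_y (R : realType) (Y : finType) (L : (Y -> R) -> Y -> \bar R)
  (HL : score_function L) (y : Y) :
  exists B : R, forall q, is_dist q -> (B%:E <= L q y)%E.
Proof.
case: HL => Hninf [Hlsc _].
pose S (n : nat) := [set q : Y -> R | is_dist q /\ (L q y < (- n%:R)%:E)%E].
suff [n Sn0] : exists n : nat, S n = set0.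
  exists (- n%:R) => q dq; rewrite leNgt; apply/negP => lt.
  have : S n q by split.
  by rewrite Sn0.
apply: contrapT => /forallNP H.
have Sne n : S n !=set0 by apply/set0P/eqP/H.
pose F : set_system {ptws Y -> R} := filter_from setT S.
have FF : Filter F.
  apply: filter_fromT_filter; first by exists 0%N.
  move=> i j; exists (maxn i j) => q [dq Lq]; split; split => //;
  apply: (lt_le_trans Lq); rewrite lee_fin lerN2 ler_nat ?leq_maxl ?leq_maxr //.
have PF : ProperFilter F.
  by apply: filter_from_proper => i _; exact: Sne.
pose A := fun _ : Y => `[(0:R), 1]%classic.
have Aco : compact [set f : {ptws Y -> R} | forall i, A i (f i)].
  by apply: tychonoff => i; exact: segment_compact.
have FA : F [set f : {ptws Y -> R} | forall i, A i (f i)].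
  exists 0%N => // q [dq _] i; rewrite /A /= in_itv /=.
  by rewrite (@dist_le1 _ _ _ i dq) andbT; case: dq.
have [q0 [Aq0 Cq0]] := Aco F PF FA.
have dq0 : is_dist q0.
  split; first by move=> i; have := Aq0 i; rewrite /A /= in_itv /= => /andP[].
  apply: contrapT => /eqP ne.
  have Ypos : (0 < #|Y|)%N by apply/card_gt0P; exists y.
  pose e := `|\sum_z q0 z - 1|.
  have e0 : 0 < e by rewrite normr_gt0 subr_eq0.
  pose d := e / (2 * #|Y|%:R).
  have d0 : 0 < d by rewrite divr_gt0 // mulr_gt0 // ltr0n.
  have [f [[[f0 f1] _] /= fn]] := Cq0 _ _ (@in_filter_from _ _ setT S 0%N I) (@nbhs_box _ _ q0 d d0).
  have : `|\sum_z f z - \sum_z q0 z| <= e / 2.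
    rewrite -sumrB; apply: (le_trans (ler_norm_sum _ _ _)).
    apply: (le_trans (y := \sum_(z : Y) d)); first by apply: ler_sum => z _; exact/ltW/fn.
    rewrite sumr_const /d.
    have -> : #|[pred x : Y | xpredT x]| = #|Y| by apply: eq_card.
    have Yn : #|Y|%:R != 0 :> R by rewrite pnatr_eq0 -lt0n.
    rewrite -mulr_natr le_eqVlt; apply/orP; left; apply/eqP; field; exact: Yn.
  move=> H2.
  have : e <= e / 2.
    move: H2; rewrite /e => H2; apply: le_trans H2; rewrite distrC.
    have -> : \sum_z f z = 1 by exact: f1.
    by [].
  by move=> ?; lra.
have [t Lt] : exists t : R, (t%:E < L q0 y)%E.
  move: (Hninf q0 y dq0); case: (L q0 y) => [r| |] //.
  - by move=> _; exists (r - 1); rewrite lte_fin; lra.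
  - by move=> _; exists 0; exact: ltry.
have [d d0 Hd] := Hlsc y q0 dq0 t Lt.
pose n := Num.Def.archi_bound `|t|.
have nt : `|t| < n%:R by apply: archi_boundP.
have [f [[df Lf] /= fn]] := Cq0 _ _ (@in_filter_from _ _ setT S n I) (@nbhs_box _ _ q0 d d0).
have H4 := Hd f df fn.
have := lt_trans H4 Lf; rewrite lte_fin => H3.
have : - t <= `|t| by rewrite ler_normr lexx orbT.
lra.
Qed.
End LB.

Lemma L_lb (R : realType) (Y : finType) (L : (Y -> R) -> Y -> \bar R)
  (HL : score_function L) :
  exists B : R, forall q y, is_dist q -> (B%:E <= L q y)%E.
Proof.
have /choice [Bf HB] := @L_lb_y R Y L HL.
exists (- \sum_y `|Bf y|) => q y dq.
apply: le_trans (HB y q dq); rewrite lee_fin lerNl.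
rewrite (bigD1 y) //= -[X in X <= _]addr0 lerD //.
- by rewrite ler_normr lexx orbT.
- by apply: sumr_ge0 => i _.
Qed.

Section Fan.
Variables (R : realType) (T : Type) (mix : R -> T -> T -> T).

Definition mixclosed (K : set T) :=
  forall t x y, 0 <= t -> t <= 1 -> K x -> K y -> K (mix t x y).
Definition convexon (K : set T) (f : T -> R) :=
  forall t x y, 0 <= t -> t <= 1 -> K x -> K y ->
    f (mix t x y) <= t * f x + (1 - t) * f y.

Lemma key_ineq (K : set T) (f g : T -> R) : mixclosed K ->
  convexon K f -> convexon K g -> (forall x, K x -> 0 <= f x \/ 0 <= g x) ->
  forall x1 x2, K x1 -> K x2 -> f x1 < 0 -> 0 <= g x1 -> g x2 < 0 -> 0 <= f x2 ->
  - g x2 / (f x2 - g x2) <= g x1 / (g x1 - f x1).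
Proof.
move=> Km cf cg H x1 x2 K1 K2 u1n v1p v2n u2p.
set u1 := f x1 in u1n *; set v1 := g x1 in v1p *.
set u2 := f x2 in u2p *; set v2 := g x2 in v2n *.
pose D := (u2 - v2) + (v1 - u1).
have D0 : 0 < D by rewrite /D; lra.
pose s := (u2 - v2) / D.
have s0 : 0 <= s by rewrite /s divr_ge0 //; [lra | exact: ltW].
have s1 : s <= 1 by rewrite /s ler_pdivrMr // mul1r /D; lra.
have Kx := Km s x1 x2 s0 s1 K1 K2.
have Ef : s * u1 + (1 - s) * u2 = (v1 * u2 - u1 * v2) / D.
  rewrite /s /D; field; apply/negP => /eqP; lra.
have Eg : s * v1 + (1 - s) * v2 = (v1 * u2 - u1 * v2) / D.
  rewrite /s /D; field; apply/negP => /eqP; lra.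
have W0 : 0 <= (v1 * u2 - u1 * v2) / D.
  case: (H _ Kx) => h.
    by rewrite -Ef; apply: le_trans h (cf _ _ _ s0 s1 K1 K2).
  by rewrite -Eg; apply: le_trans h (cg _ _ _ s0 s1 K1 K2).
have N0 : 0 <= v1 * u2 - u1 * v2.
  by have := mulr_ge0 W0 (ltW D0); rewrite divfK // gt_eqF.
rewrite -subr_ge0.
have -> : v1 / (v1 - u1) - - v2 / (u2 - v2) =
   (v1 * u2 - u1 * v2) / ((v1 - u1) * (u2 - v2)).
  field; apply/andP; split; apply/negP => /eqP; lra.
apply: divr_ge0 => //; apply: mulr_ge0; lra.
Qed.

Lemma two_fun (K : set T) (f g : T -> R) : mixclosed K ->
  convexon K f -> convexon K g -> (forall x, K x -> 0 <= f x \/ 0 <= g x) ->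
  exists t, [/\ 0 <= t, t <= 1 & forall x, K x -> 0 <= t * f x + (1 - t) * g x].
Proof.
move=> Km cf cg H.
pose A := [set r : R | exists x, [/\ K x, g x < 0 & r = - g x / (f x - g x)]].
have [A0|/set0P [r0 Ar0]] := eqVneq A set0; last first.
  have Aub : ubound A 1.
    move=> r [x [Kx gx ->]]; have fx : 0 <= f x by case: (H _ Kx) => // h; lra.
    by rewrite ler_pdivrMr ?mul1r; lra.
  have hs : has_sup A by split; [exists r0 | exists 1].
  have s0 : 0 <= sup A.
    have r0le : r0 <= sup A by apply: sup_upper_bound.
    apply: le_trans r0le; case: Ar0 => x [Kx gx ->].
    have fx : 0 <= f x by case: (H _ Kx) => // h; lra.
    by apply: divr_ge0; lra.
  exists (sup A); split => //.
  - by apply: ge_sup => //; exists r0.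
  - move=> x Kx.
    have [gx|gx] := ltP (g x) 0.
      have fx : 0 <= f x by case: (H _ Kx) => // h; lra.
      have ps : - g x / (f x - g x) <= sup A by apply: sup_upper_bound => //; exists x.
      have E : g x + (- g x / (f x - g x)) * (f x - g x) = 0.
        by field; apply/negP => /eqP; lra.
      have : (- g x / (f x - g x)) * (f x - g x) <= sup A * (f x - g x).
        by apply: ler_wpM2r => //; lra.
      move=> h; have -> : sup A * f x + (1 - sup A) * g x = g x + sup A * (f x - g x) by ring.
      lra.
    have [fx|fx] := ltP (f x) 0.
      have ps : sup A <= g x / (g x - f x).
        apply: ge_sup; first by exists r0.
        move=> r [x2 [K2 g2 ->]].
        have f2 : 0 <= f x2 by case: (H _ K2) => // h; lra.
        exact: (@key_ineq _ _ _ Km cf cg H _ _ Kx K2 fx gx g2 f2).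
      have E : g x - (g x / (g x - f x)) * (g x - f x) = 0.
        by field; apply/negP => /eqP; lra.
      have : sup A * (g x - f x) <= (g x / (g x - f x)) * (g x - f x).
        by apply: ler_wpM2r => //; lra.
      move=> h; have -> : sup A * f x + (1 - sup A) * g x = g x - sup A * (g x - f x) by ring.
      lra.
    have s1 : sup A <= 1 by apply: ge_sup => //; exists r0.
    by apply: addr_ge0; apply: mulr_ge0 => //; lra.
exists 0; split => // x Kx; rewrite mul0r add0r subr0 mul1r.
rewrite leNgt; apply/negP => gx.
have : A (- g x / (f x - g x)) by exists x.
by rewrite A0.
Qed.

Lemma sum2 (I : finType) (S : {set I}) i j (G : I -> R) : i \in S -> j \in S -> i != j ->
  \sum_(k in S) G k = G i + G j + \sum_(k in S | (k != i) && (k != j)) G k.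
Proof.
move=> Si Sj ij; rewrite (bigD1 i) //= (bigD1 j) /=; last by rewrite Sj eq_sym ij.
by rewrite addrA; congr (_ + _); apply: eq_bigl => k; rewrite andbA.
Qed.

Lemma sum1 (I : finType) (S : {set I}) i j (G : I -> R) : j \in S -> i != j ->
  \sum_(k in S :\ i) G k = G j + \sum_(k in S | (k != i) && (k != j)) G k.
Proof.
move=> Sj ij; rewrite (bigD1 j) /=; last by rewrite in_setD1 Sj eq_sym ij.
congr (_ + _); apply: eq_bigl => k; rewrite in_setD1.
by rewrite [(k != i) && _]andbC andbA.
Qed.

Arguments sum2 {I S i j} G.
Arguments sum1 {I S} i {j} G.
Lemma fan (I : finType) n : forall (S : {set I}) (f : I -> T -> R) (K : set T),
  #|S| = n.+1 -> mixclosed K -> (forall i, i \in S -> convexon K (f i)) ->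
  (forall x, K x -> exists2 i, i \in S & 0 <= f i x) ->
  exists lam : I -> R, [/\ forall i, 0 <= lam i, \sum_(i in S) lam i = 1 &
     forall x, K x -> 0 <= \sum_(i in S) lam i * f i x].
Proof.
elim: n => [|n IH] S f K cS Km cf cov.
  have /cards1P [i0 Si0] : #|S| == 1%N by rewrite cS.
  exists (fun k => if k == i0 then 1 else 0); split.
  - by move=> k; case: (k == i0).
  - by rewrite Si0 big_set1 eqxx.
  - move=> x Kx; have [i Si fi] := cov x Kx; move: Si; rewrite Si0 inE => /eqP Ei; subst i.
    by rewrite big_set1 eqxx mul1r.
have /card_gt0P [i Si] : (0 < #|S|)%N by rewrite cS.
have cS' : #|S :\ i| = n.+1 by move: cS; rewrite (cardsD1 i) Si add1n => -[].
have /card_gt0P [j Sj'] : (0 < #|S :\ i|)%N by rewrite cS'.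
have Sj : j \in S by move: Sj'; rewrite in_setD1 => /andP[].
have ji : j != i by move: Sj'; rewrite in_setD1 => /andP[].
have ij : i != j by rewrite eq_sym.
pose K' := [set x | K x /\ forall k, k \in S -> k != i -> k != j -> f k x < 0].
have K'm : mixclosed K'.
  move=> s x y s0 s1 [Kx Hx] [Ky Hy]; split; first exact: Km.
  move=> k Sk ki kj; apply: le_lt_trans (cf k Sk s x y s0 s1 Kx Ky) _.
  have := Hx k Sk ki kj; have := Hy k Sk ki kj; nra.
have cfK' k : k \in S -> convexon K' (f k).
  by move=> Sk s x y s0 s1 [Kx _] [Ky _]; exact: cf.
have cov' : forall x, K' x -> 0 <= f i x \/ 0 <= f j x.
  move=> x [Kx Hx]; have [k Sk fk] := cov x Kx.
  have [Eki|ki] := eqVneq k i; first by left; rewrite -Eki.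
  have [Ekj|kj] := eqVneq k j; first by right; rewrite -Ekj.
  by have := Hx k Sk ki kj; rewrite ltNge fk.
have [t [t0 t1 Ht]] := @two_fun K' (f i) (f j) K'm (cfK' i Si) (cfK' j Sj) cov'.
pose f' := fun k => if k == j then (fun x => t * f i x + (1 - t) * f j x) else f k.
have cf' : forall k, k \in S :\ i -> convexon K (f' k).
  move=> k; rewrite in_setD1 => /andP[ki Sk]; rewrite /f'.
  case: (k == j); last exact: cf.
  move=> s x y s0 s1 Kx Ky.
  have h1 := cf i Si s x y s0 s1 Kx Ky; have h2 := cf j Sj s x y s0 s1 Kx Ky.
  have h1' := ler_wpM2l t0 h1.
  have h2' : (1 - t) * f j (mix s x y) <= (1 - t) * (s * f j x + (1 - s) * f j y).
    by apply: ler_wpM2l => //; lra.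
  apply: le_trans (lerD h1' h2') _; rewrite le_eqVlt; apply/orP; left; apply/eqP; ring.
have cov2 : forall x, K x -> exists2 k, k \in S :\ i & 0 <= f' k x.
  move=> x Kx; have [K'x|nK'x] := pselect (K' x).
    by exists j => //; rewrite /f' eqxx; exact: Ht.
  have : ~ (forall k, k \in S -> k != i -> k != j -> f k x < 0) by move=> H; apply: nK'x.
  move=> /existsNP [k /not_implyP [Sk /not_implyP [ki /not_implyP [kj fk]]]].
  exists k; first by rewrite in_setD1 ki.
  by rewrite /f' (negbTE kj); move: fk; rewrite ltNge => /negP; rewrite negbK.
have [lam' [l0 l1 lf]] := IH (S :\ i) f' K cS' Km cf' cov2.
exists (fun k => if k == i then lam' j * t else if k == j then lam' j * (1 - t) else lam' k).
split.
- move=> k; case: (k == i); first exact: mulr_ge0.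
  by case: (k == j) => //; apply: mulr_ge0 => //; lra.
- rewrite (sum2 _ Si Sj ij) eqxx (negbTE ji) eqxx.
  transitivity (\sum_(i0 in S :\ i) lam' i0); last exact: l1.
  rewrite (sum1 i _ Sj ij).
  have -> : \sum_(k in S | (k != i) && (k != j))
     (if k == i then lam' j * t else if k == j then lam' j * (1 - t) else lam' k) =
     \sum_(k in S | (k != i) && (k != j)) lam' k.
    by apply: eq_bigr => k /andP[_ /andP[/negbTE -> /negbTE ->]].
  by rewrite -mulrDr addrA; congr (_ + _); ring.
- move=> x Kx; have := lf x Kx.
  rewrite (sum2 _ Si Sj ij) eqxx (negbTE ji) eqxx (sum1 i _ Sj ij) /f' eqxx.
  have -> : \sum_(k in S | (k != i) && (k != j))
     (if k == i then lam' j * t else if k == j then lam' j * (1 - t) else lam' k) * f k x =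
     \sum_(k in S | (k != i) && (k != j)) lam' k * (if k == j then (fun x => t * f i x + (1 - t) * f j x) else f k) x.
    by apply: eq_bigr => k /andP[_ /andP[/negbTE -> /negbTE ->]].
  suff -> : lam' j * t * f i x + lam' j * (1 - t) * f j x = lam' j * (t * f i x + (1 - t) * f j x) by [].
  ring.
Qed.

End Fan.

Set Implicit Arguments. Unset Strict Implicit. Unset Printing Implicit Defensive.


Lemma sum_opt (R : realType) (Z : finType) (H : option Z -> R) :
  \sum_(o : option Z) H o = H None + \sum_(z : Z) H (Some z).
Proof.
rewrite (bigD1 None) //=; congr (_ + _).
case: (pickP (@predT Z)) => [z0 _|Z0].
  rewrite (reindex_onto Some (fun o => odflt z0 o)) /=; last by case.
  by apply: eq_bigl => z; rewrite eqxx.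
rewrite big_pred0; last by case.
by rewrite big_pred0.
Qed.

Definition Sopt (Z : finType) (Z' : {set Z}) : {set option Z} :=
  [set o : option Z | if o is Some z then z \in Z' else true].

Lemma sumS (R : realType) (Z : finType) (Z' : {set Z}) (G : option Z -> R) :
  \sum_(o in Sopt Z') G o = G None + \sum_(z in Z') G (Some z).
Proof.
rewrite big_mkcond sum_opt /Sopt inE /= [in RHS]big_mkcond; congr (_ + _).
by apply: eq_bigr => z _; rewrite inE.
Qed.

Lemma card_Sopt (Z : finType) (Z' : {set Z}) : #|Sopt Z'| = (#|Sopt Z'|.-1).+1.
Proof.
rewrite prednK //; apply/card_gt0P; exists None; by rewrite inE.
Qed.

Lemma lin_zero (R : realType) (C g : R) : (forall nu, 0 <= C + nu * g) -> g = 0.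
Proof.
move=> H; apply/eqP; apply: contraT => g0.
have := H (- (`|C| + 1) / g); rewrite divfK //.
have : C <= `|C| by apply: ler_norm.
lra.
Qed.

Lemma lin_pos (R : realType) (C g : R) : (forall nu, 0 <= nu -> 0 <= C + nu * g) -> 0 <= g.
Proof.
move=> H; rewrite leNgt; apply/negP => g0.
have := H ((`|C| + 1) / (- g)).
have ng : 0 < - g by lra.
have gn0 : g != 0 by rewrite lt_eqF.
have -> : (`|C| + 1) / - g * g = - (`|C| + 1) by field.
rewrite divr_ge0 //; last by apply: ltW.
have : C <= `|C| by apply: ler_norm.
move=> h1 /(_ isT); lra.
Qed.

Lemma sum_delta (R : realType) (m : nat) (i : 'I_m) (nu : R) (f : 'I_m -> R) :
  \sum_(k < m) (if k == i then nu else 0) * f k = nu * f i.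
Proof.
rewrite (bigD1 i) //= eqxx big1 ?addr0 // => k /negbTE ->; exact: mul0r.
Qed.

Lemma extract (R : realType) (m : nat) (C : R) (al be : 'I_m -> R) (ga : R) :
  (forall mu eta nu, (forall i, 0 <= eta i + mu i /\ 0 <= eta i - mu i) ->
     0 <= C + \sum_(i < m) mu i * al i + \sum_(i < m) eta i * be i + nu * ga) ->
  ga = 0 /\ forall i, 0 <= be i + al i /\ 0 <= be i - al i.
Proof.
move=> H; split.
  apply: (@lin_zero _ C) => nu.
  have Z0 : forall i : 'I_m, 0 <= (0:R) + 0 /\ 0 <= (0:R) - 0.
    by move=> _; rewrite addr0 subr0.
  have := H (fun=> 0) (fun=> 0) nu Z0.
  rewrite !big1 => [| i _| i _]; try exact: mul0r.
  by rewrite !addr0.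
move=> i; split.
  apply: (@lin_pos _ C) => nu nu0.
  have P : forall k, 0 <= (if k == i then nu else 0) + (if k == i then nu else 0) /\
                     0 <= (if k == i then nu else 0) - (if k == i then nu else 0).
    by move=> k; case: (k == i); split; lra.
  have := H _ _ 0 P; rewrite !sum_delta; lra.
apply: (@lin_pos _ C) => nu nu0.
have P : forall k, 0 <= (if k == i then nu else 0) + (if k == i then - nu else 0) /\
                   0 <= (if k == i then nu else 0) - (if k == i then - nu else 0).
  by move=> k; case: (k == i); split; lra.
have := H _ _ 0 P; rewrite !sum_delta; lra.
Qed.


Section Main.
Variables (R : realType) (X Y : finType) (m : nat) (Phi : X -> Y -> 'I_m -> R) (a b : 'I_m -> R).

Definition Ev (p : X * Y -> R) (i : 'I_m) : R := \sum_(z : X * Y) p z * Phi z.1 z.2 i.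

Lemma lp_objE mu eta nu : lp_obj a b mu eta nu =
  \sum_(i < m) (2^-1 * (b i + a i) * mu i - 2^-1 * (b i - a i) * eta i) + nu.
Proof.
rewrite /lp_obj !mulr_sumr -sumrB; congr (_ + _); apply: eq_bigr => i _; ring.
Qed.

Lemma sum_pPhi (p : X * Y -> R) (mu : 'I_m -> R) :
  \sum_(z : X * Y) p z * (\sum_(i < m) Phi z.1 z.2 i * mu i) = \sum_(i < m) Ev p i * mu i.
Proof.
under eq_bigr do rewrite mulr_sumr.
rewrite exchange_big; apply: eq_bigr => i _; rewrite /Ev mulr_suml.
by apply: eq_bigr => z _; ring.
Qed.

Lemma wd p : Uab Phi a b p -> forall mu eta nu (c : X * Y -> R),
  (forall z, \sum_(i < m) Phi z.1 z.2 i * mu i + nu <= c z) ->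
  (forall i, 0 <= eta i + mu i /\ 0 <= eta i - mu i) ->
  lp_obj a b mu eta nu <= \sum_(z : X * Y) p z * c z.
Proof.
move=> [[p0 p1] Hab] mu eta nu c Hc He.
apply: le_trans (_ : _ <= \sum_(z : X * Y) p z * (\sum_(i < m) Phi z.1 z.2 i * mu i + nu)) _;
  last by apply: ler_sum => z _; apply: ler_wpM2l.
have -> : \sum_(z : X * Y) p z * (\sum_(i < m) Phi z.1 z.2 i * mu i + nu) =
          \sum_(i < m) Ev p i * mu i + nu.
  under eq_bigr do rewrite mulrDr.
  by rewrite big_split /= sum_pPhi -mulr_suml p1 mul1r.
rewrite lp_objE lerD2r; apply: ler_sum => i _.
have /andP [h1 h2] : a i <= Ev p i <= b i := Hab i.
have [e1 e2] := He i.
have k1 : 0 <= (Ev p i - a i) * (eta i + mu i) by apply: mulr_ge0; lra.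
have k2 : 0 <= (b i - Ev p i) * (eta i - mu i) by apply: mulr_ge0; lra.
nra.
Qed.


Lemma U_mix p q t : Uab Phi a b p -> Uab Phi a b q -> 0 <= t <= 1 ->
  Uab Phi a b (fun z => t * p z + (1 - t) * q z).
Proof.
move=> [[p0 p1] Hp] [[q0 q1] Hq] /andP[t0 t1]; split; first split.
- by move=> z; apply: addr_ge0; apply: mulr_ge0 => //; lra.
- by rewrite big_split /= -!mulr_sumr p1 q1; ring.
move=> i.
have -> : \sum_(z : X * Y) (t * p z + (1 - t) * q z) * Phi z.1 z.2 i = t * Ev p i + (1 - t) * Ev q i.
  rewrite /Ev !mulr_sumr -big_split /=; apply: eq_bigr => z _; ring.
have /andP [h1 h2] : a i <= Ev p i <= b i := Hp i.
have /andP [h3 h4] : a i <= Ev q i <= b i := Hq i.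
apply/andP; split; nra.
Qed.

Lemma U_avg (w : X * Y -> X * Y -> R) : (0 < #|{: X * Y}|)%N ->
  (forall k, Uab Phi a b (w k)) ->
  Uab Phi a b (fun z => \sum_(k : X * Y) (#|{: X * Y}|%:R)^-1 * w k z).
Proof.
move=> n0 Hw; set c := (#|{: X * Y}|%:R)^-1 : R.
have c0 : 0 <= c by rewrite /c invr_ge0 ler0n.
have cn : \sum_(k : X * Y) c = 1.
  rewrite sumr_const.
  have -> : #|[pred x : X * Y | xpredT x]| = #|{: X * Y}| by apply: eq_card.
  by rewrite -mulr_natl /c mulfV // pnatr_eq0 -lt0n.
split; first split.
- by move=> z; apply: sumr_ge0 => k _; apply: mulr_ge0 => //; case: (Hw k) => -[].
- rewrite exchange_big /= -cn; apply: eq_bigr => k _.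
  by rewrite -mulr_sumr; case: (Hw k) => -[_ ->]; rewrite mulr1.
move=> i.
have -> : \sum_(z : X * Y) (\sum_(k : X * Y) c * w k z) * Phi z.1 z.2 i =
          \sum_(k : X * Y) c * Ev (w k) i.
  under eq_bigr do rewrite mulr_suml.
  rewrite exchange_big; apply: eq_bigr => k _; rewrite /Ev mulr_sumr.
  by apply: eq_bigr => z _; ring.
apply/andP; split.
- rewrite -[a i]mul1r -cn mulr_suml; apply: ler_sum => k _.
  by apply: ler_wpM2l => //; have /andP[] : a i <= Ev (w k) i <= b i := (Hw k).2 i.
- rewrite -[b i]mul1r -cn mulr_suml; apply: ler_sum => k _.
  by apply: ler_wpM2l => //; have /andP[] : a i <= Ev (w k) i <= b i := (Hw k).2 i.
Qed.


Lemma ell_real (L : (Y -> R) -> Y -> \bar R) (h : X -> Y -> R) (p c : X * Y -> R) :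
  (forall z, p z != 0 -> L (h z.1) z.2 = (c z)%:E) ->
  ell L h p = (\sum_(z : X * Y) p z * c z)%:E.
Proof.
move=> H; rewrite /ell -sumEFin; apply: eq_bigr => z _.
have [->|pz] := eqVneq (p z) 0; first by rewrite mul0e mul0r.
by rewrite H // EFinM.
Qed.

Lemma ell_ge (L : (Y -> R) -> Y -> \bar R) (h : X -> Y -> R) (p c : X * Y -> R) :
  (forall z, 0 <= p z) -> (forall z, ((c z)%:E <= L (h z.1) z.2)%E) ->
  ((\sum_(z : X * Y) p z * c z)%:E <= ell L h p)%E.
Proof.
move=> p0 H; rewrite /ell -sumEFin; apply: lee_sum => z _.
by rewrite EFinM; apply: lee_wpmul2l => //; rewrite lee_fin.
Qed.

Lemma ell_pinfty (L : (Y -> R) -> Y -> \bar R) (h : X -> Y -> R) (p : X * Y -> R) B z0 :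
  (forall z, 0 <= p z) -> (forall z, (B%:E <= L (h z.1) z.2)%E) ->
  0 < p z0 -> L (h z0.1) z0.2 = +oo%E -> ell L h p = +oo%E.
Proof.
move=> p0 HB pz0 Lz0; rewrite /ell (bigD1 z0) //= Lz0 gt0_muley ?lte_fin //.
apply: addye.
have : ((\sum_(z | z != z0) p z * B)%:E <= \sum_(z | z != z0) (p z)%:E * L (h z.1) z.2)%E.
  rewrite -sumEFin; apply: lee_sum => z _.
  by rewrite EFinM; apply: lee_wpmul2l => //; rewrite lee_fin.
by move=> H; apply/negP => /eqP E; move: H; rewrite E leeNy_eq.
Qed.

End Main.


Section Part3.
Variables (R : realType) (X Y : finType) (m : nat) (Phi : X -> Y -> 'I_m -> R) (a b : 'I_m -> R).

Definition T3 := (('I_m -> R) * ('I_m -> R) * R)%type.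
Definition mix3 (t : R) (x y : T3) : T3 :=
  ((fun i => t * x.1.1 i + (1 - t) * y.1.1 i, fun i => t * x.1.2 i + (1 - t) * y.1.2 i),
   t * x.2 + (1 - t) * y.2).
Definition cone3 : set T3 := fun x => forall i, 0 <= x.1.2 i + x.1.1 i /\ 0 <= x.1.2 i - x.1.1 i.

Lemma cone3_mix : mixclosed _ _ mix3 cone3.
Proof.
move=> t x y t0 t1 Hx Hy i /=; have [h1 h2] := Hx i; have [h3 h4] := Hy i.
have k1 : 0 <= t * (x.1.2 i + x.1.1 i) by apply: mulr_ge0.
have k2 : 0 <= (1 - t) * (y.1.2 i + y.1.1 i) by apply: mulr_ge0; lra.
have k3 : 0 <= t * (x.1.2 i - x.1.1 i) by apply: mulr_ge0.
have k4 : 0 <= (1 - t) * (y.1.2 i - y.1.1 i) by apply: mulr_ge0; lra.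
split; nra.
Qed.

Lemma lp_obj_mix t x y : lp_obj a b (mix3 t x y).1.1 (mix3 t x y).1.2 (mix3 t x y).2 =
  t * lp_obj a b x.1.1 x.1.2 x.2 + (1 - t) * lp_obj a b y.1.1 y.1.2 y.2.
Proof.
rewrite !lp_objE /=.
have -> : \sum_(i < m) (2^-1 * (b i + a i) * (t * x.1.1 i + (1 - t) * y.1.1 i) -
     2^-1 * (b i - a i) * (t * x.1.2 i + (1 - t) * y.1.2 i)) =
  t * \sum_(i < m) (2^-1 * (b i + a i) * x.1.1 i - 2^-1 * (b i - a i) * x.1.2 i) +
  (1 - t) * \sum_(i < m) (2^-1 * (b i + a i) * y.1.1 i - 2^-1 * (b i - a i) * y.1.2 i).
  by rewrite !mulr_sumr -big_split; apply: eq_bigr => i _ /=; ring.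
ring.
Qed.

Lemma lin_mix (c : 'I_m -> R) t x y :
  \sum_(i < m) c i * (mix3 t x y).1.1 i = t * \sum_(i < m) c i * x.1.1 i + (1 - t) * \sum_(i < m) c i * y.1.1 i.
Proof. by rewrite !mulr_sumr -big_split; apply: eq_bigr => i _ /=; ring. Qed.


Lemma part3 (L : (Y -> R) -> Y -> \bar R) (HL : score_function L)
  (h : X -> Y -> R) (Hrule : is_rule h) (Rlow : R) (HRlow : is_lp_max Phi L h a b Rlow)
  (pstar : X * Y -> R)
  (Hmin : forall p, Uab Phi a b p -> (ell L h pstar <= ell L h p)%E) :
  (ell L h pstar <= Rlow%:E)%E.
Proof.
rewrite leNgt; apply/negP => Hlt.
have [s [s1 s2]] : exists s, Rlow < s /\ (s%:E < ell L h pstar)%E.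
  move: Hlt; case: (ell L h pstar) => [r| |] //.
  - by rewrite lte_fin => H; exists ((Rlow + r) / 2); rewrite lte_fin; split; lra.
  - by move=> _; exists (Rlow + 1); split; [lra | exact: ltry].
pose c z := L (h z.1) z.2.
pose Zf : {set X * Y} := [set z : X * Y | c z != +oo%E]%SET.
pose fc z := fine (c z).
have cfin : forall z, z \in Zf -> c z = (fc z)%:E.
  move=> z; rewrite inE => cz; rewrite /fc fineK // fin_numE cz andbT.
  by case: HL => H _; apply: H; apply: Hrule.
pose fF (o : option (X * Y)) (x : T3) : R :=
  if o is Some z then \sum_(i < m) Phi z.1 z.2 i * x.1.1 i + x.2 - fc z
  else s - lp_obj a b x.1.1 x.1.2 x.2.
have conv : forall o, o \in Sopt Zf -> convexon _ _ mix3 cone3 (fF o).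
  move=> o _ t x y t0 t1 Hx Hy; rewrite le_eqVlt; apply/orP; left; apply/eqP.
  case: o => [z|] /=.
    by rewrite lin_mix; ring.
  by rewrite lp_obj_mix; ring.
have cover : forall x, cone3 x -> exists2 o, o \in Sopt Zf & 0 <= fF o x.
  move=> x Kx.
  have [[z [Zz Hz]]|nz] := pselect (exists z, z \in Zf /\ 0 <= fF (Some z) x).
    by exists (Some z) => //; rewrite inE.
  exists None; first by rewrite inE.
  have feas : lp_feasible Phi L h x.1.1 x.1.2 x.2.
    split => // x0 y0.
    have [Zz|nZz] := boolP ((x0, y0) \in Zf).
      have := cfin _ Zz; rewrite /c /= => ->; rewrite lee_fin; apply: ltW; rewrite ltNge; apply/negP => H.
      by apply: nz; exists (x0, y0); split => //=; rewrite subr_ge0.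
    move: nZz; rewrite inE negbK => /eqP E.
    by rewrite /c /= in E; rewrite E leey.
  have := HRlow.2 _ _ _ feas; rewrite /fF; lra.
have [lam [l0 l1 lf]] := @fan R T3 mix3 _ _ (Sopt Zf) fF cone3 (card_Sopt Zf) cone3_mix conv cover.
have sumZf : forall G : X * Y -> R, \sum_(z in Zf) G z = \sum_(z : X * Y) (if z \in Zf then G z else 0).
  by move=> G; rewrite big_mkcond.
have lam0 : 0 < lam None.
  rewrite lt_def l0 andbT; apply/negP => /eqP L0.
  pose nu0 := - (\sum_(z : X * Y) `|fc z|) - 1.
  have K0 : cone3 ((fun=> 0, fun=> 0), nu0) by move=> i /=; rewrite addr0 subr0.
  have := lf _ K0; rewrite sumS L0 mul0r add0r.
  have : \sum_(z in Zf) lam (Some z) * fF (Some z) ((fun=> 0, fun=> 0), nu0) <=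
         \sum_(z in Zf) lam (Some z) * (-1).
    apply: ler_sum => z _; apply: ler_wpM2l => //=.
    rewrite big1 ?add0r => [|i _]; last exact: mulr0.
    have : `|fc z| <= \sum_(z : X * Y) `|fc z|.
      by rewrite (bigD1 z) //= lerDl; apply: sumr_ge0.
    have : - fc z <= `|fc z| by rewrite ler_normr lexx orbT.
    rewrite /nu0; lra.
  have -> : \sum_(z in Zf) lam (Some z) * (-1) = -1.
    under eq_bigr do rewrite mulrN1.
    by rewrite sumrN; move: l1; rewrite sumS L0 add0r => ->.
  lra.
pose p z := if z \in Zf then lam (Some z) / lam None else 0.
have keyI : forall x, cone3 x -> 0 <= fF None x + \sum_(z : X * Y) p z * fF (Some z) x.
  move=> x Kx; have := lf _ Kx; rewrite sumS.
  have -> : \sum_(z in Zf) lam (Some z) * fF (Some z) x =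
            lam None * \sum_(z : X * Y) p z * fF (Some z) x.
    rewrite sumZf mulr_sumr; apply: eq_bigr => z _; rewrite /p.
    case: ifP => _; last by rewrite mul0r mulr0.
    by field; rewrite gt_eqF.
  by rewrite -mulrDr pmulr_rge0.
pose C := s - \sum_(z : X * Y) p z * fc z.
pose al i := Ev Phi p i - 2^-1 * (b i + a i).
pose be i := 2^-1 * (b i - a i) : R.
pose ga := \sum_(z : X * Y) p z - 1.
have expand : forall x : T3, fF None x + \sum_(z : X * Y) p z * fF (Some z) x =
    C + \sum_(i < m) x.1.1 i * al i + \sum_(i < m) x.1.2 i * be i + x.2 * ga.
  move=> [[mu eta] nu] /=.
  have -> : \sum_(z : X * Y) p z * (\sum_(i < m) Phi z.1 z.2 i * mu i + nu - fc z) =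
     \sum_(i < m) Ev Phi p i * mu i + nu * \sum_(z : X * Y) p z - \sum_(z : X * Y) p z * fc z.
    under eq_bigr do rewrite mulrBr mulrDr.
    by rewrite sumrB big_split /= sum_pPhi mulr_sumr; congr (_ + _ - _); apply: eq_bigr => z _; ring.
  rewrite lp_objE.
  have E2 : \sum_(i < m) mu i * al i + \sum_(i < m) eta i * be i =
     \sum_(i < m) Ev Phi p i * mu i -
     \sum_(i < m) (2^-1 * (b i + a i) * mu i - 2^-1 * (b i - a i) * eta i).
    rewrite -big_split -sumrB; apply: eq_bigr => i _ /=; rewrite /al /be; ring.
  rewrite -[C + _ + _]addrA E2 /C /ga; ring.
have [ga0 Hab] := @extract R m C al be ga (fun mu eta nu Hc =>
   eq_ind _ (fun r => 0 <= r) (keyI ((mu, eta), nu) Hc) _ (expand ((mu, eta), nu))).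
have Up : Uab Phi a b p.
  split; first split.
  - by move=> z; rewrite /p; case: ifP => // _; apply: divr_ge0 => //; exact: ltW.
  - by move: ga0; rewrite /ga => /eqP; rewrite subr_eq0 => /eqP.
  - move=> i; have [h1 h2] := Hab i; rewrite /al /be in h1 h2.
    by apply/andP; split; rewrite -/(Ev Phi p i); lra.
have C0 : 0 <= C.
  have K0 : cone3 ((fun=> 0, fun=> 0), 0) by move=> i /=; rewrite addr0 subr0.
  have := keyI _ K0; rewrite expand /= !big1 ?mul0r ?addr0 // => i _; exact: mul0r.
have ellp : ell L h p = (\sum_(z : X * Y) p z * fc z)%:E.
  apply: ell_real => z; rewrite /p; case: ifP => [Zz _|]; last by rewrite eqxx.
  exact: cfin.
have := Hmin _ Up; rewrite ellp => H1.
have : (ell L h pstar < ell L h pstar)%E.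
  apply: le_lt_trans H1 _; apply: le_lt_trans s2; rewrite lee_fin.
  by move: C0; rewrite /C subr_ge0.
by rewrite ltxx.
Qed.

End Part3.


Section Part1b.
Variables (R : realType) (X Y : finType) (m : nat) (Phi : X -> Y -> 'I_m -> R) (a b : 'I_m -> R).
Variable (L : (Y -> R) -> Y -> \bar R).
Hypothesis HL : score_function L.

Definition T4 := ((X -> Y -> R) * ('I_m -> R) * ('I_m -> R) * R)%type.
Definition mix4 (t : R) (x y : T4) : T4 :=
  (((fun x0 y0 => t * x.1.1.1 x0 y0 + (1 - t) * y.1.1.1 x0 y0,
     fun i => t * x.1.1.2 i + (1 - t) * y.1.1.2 i),
     fun i => t * x.1.2 i + (1 - t) * y.1.2 i),
   t * x.2 + (1 - t) * y.2).

Definition Fup (mu eta : 'I_m -> R) (nu : R) : R := - lp_obj a b (fun i => - mu i) eta (- nu).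

Lemma FupE mu eta nu : Fup mu eta nu =
  \sum_(i < m) (2^-1 * (b i + a i) * mu i + 2^-1 * (b i - a i) * eta i) + nu.
Proof.
rewrite /Fup lp_objE opprD opprK -sumrN; congr (_ + _); apply: eq_bigr => i _; ring.
Qed.

Lemma Fup_mix t x y : Fup (mix4 t x y).1.1.2 (mix4 t x y).1.2 (mix4 t x y).2 =
  t * Fup x.1.1.2 x.1.2 x.2 + (1 - t) * Fup y.1.1.2 y.1.2 y.2.
Proof.
rewrite !FupE /=.
have -> : \sum_(i < m) (2^-1 * (b i + a i) * (t * x.1.1.2 i + (1 - t) * y.1.1.2 i) +
     2^-1 * (b i - a i) * (t * x.1.2 i + (1 - t) * y.1.2 i)) =
  t * \sum_(i < m) (2^-1 * (b i + a i) * x.1.1.2 i + 2^-1 * (b i - a i) * x.1.2 i) +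
  (1 - t) * \sum_(i < m) (2^-1 * (b i + a i) * y.1.1.2 i + 2^-1 * (b i - a i) * y.1.2 i).
  by rewrite !mulr_sumr -big_split; apply: eq_bigr => i _ /=; ring.
ring.
Qed.

Lemma wd_up p : Uab Phi a b p -> forall mu eta nu (c : X * Y -> R),
  (forall z, c z <= \sum_(i < m) Phi z.1 z.2 i * mu i + nu) ->
  (forall i, 0 <= eta i + mu i /\ 0 <= eta i - mu i) ->
  \sum_(z : X * Y) p z * c z <= Fup mu eta nu.
Proof.
move=> Up mu eta nu c Hc He.
have := @wd R X Y m Phi a b p Up (fun i => - mu i) eta (- nu) (fun z => - c z).
rewrite /Fup.
have -> : \sum_(z : X * Y) p z * - c z = - \sum_(z : X * Y) p z * c z.
  by rewrite -sumrN; apply: eq_bigr => z _; rewrite mulrN.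
move=> H; rewrite lerNr; apply: H.
- move=> z; have := Hc z.
  have -> : \sum_(i < m) Phi z.1 z.2 i * - mu i = - \sum_(i < m) Phi z.1 z.2 i * mu i.
    by rewrite -sumrN; apply: eq_bigr => i _; rewrite mulrN.
  lra.
- by move=> i; have [h1 h2] := He i; split; lra.
Qed.

Lemma fin_le (u : \bar R) (r : R) : u != -oo%E -> (u <= r%:E)%E ->
  u = (fine u)%:E /\ fine u <= r.
Proof. by case: u. Qed.


Lemma minimax (HX : (0 < #|X|)%N) (HY : (0 < #|Y|)%N)
  (HU : Uab Phi a b !=set0) (h : X -> Y -> R) (Hh : is_MRC L (Uab Phi a b) h) :
  (worst L (Uab Phi a b) h <= HentU L (Uab Phi a b))%E.
Proof.
have [B HB] := @L_lb _ _ _ HL.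
have [Hninf [_ Hcvx]] := HL.
case: HU => p0 Up0.
pose Z' : {set X * Y} := [set z : X * Y | `[< exists p, Uab Phi a b p /\ p z != 0 >]]%SET.
have Z'P : forall z p, Uab Phi a b p -> p z != 0 -> z \in Z'.
  by move=> z p Up pz; rewrite inE; apply/asboolP; exists p.
have nZ' : forall z p, Uab Phi a b p -> z \notin Z' -> p z = 0.
  by move=> z p Up; apply: contraNeq => pz; exact: Z'P pz.
have nXY : (0 < #|{: X * Y}|)%N by rewrite card_prod muln_gt0 HX HY.
have /choice [w Hw] : forall k : X * Y, exists p, Uab Phi a b p /\ (k \in Z' -> p k != 0).
  move=> k; have [kZ|kZ] := boolP (k \in Z').
    by move: kZ; rewrite inE => /asboolP [p [Up pk]]; exists p.
  by exists p0; split => //; rewrite (negbTE kZ).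
pose pb z := \sum_(k : X * Y) (#|{: X * Y}|%:R)^-1 * w k z.
have Upb : Uab Phi a b pb by apply: U_avg => // k; case: (Hw k).
have pbpos : forall z, z \in Z' -> 0 < pb z.
  move=> z zZ; rewrite /pb (bigD1 z) //=.
  have w0 : forall k z', 0 <= w k z' by move=> k z'; case: (Hw k) => -[[]].
  have h2 : 0 <= \sum_(k | k != z) (#|{: X * Y}|%:R)^-1 * w k z.
    by apply: sumr_ge0 => k _; apply: mulr_ge0 => //; rewrite invr_ge0.
  have h1 : 0 < (#|{: X * Y}|%:R)^-1 * w z z.
    apply: mulr_gt0; first by rewrite invr_gt0 ltr0n.
    by rewrite lt_def w0 andbT; case: (Hw z) => _; apply.
  lra.
have ruleB : forall (h' : X -> Y -> R) (z : X * Y), is_rule h' -> (B%:E <= L (h' z.1) z.2)%E.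
  by move=> h' z Hr; apply: HB; apply: Hr.
have [[h0 [r0 f0]]|noh] := pselect (exists h0, is_rule h0 /\ forall z, z \in Z' -> L (h0 z.1) z.2 != +oo%E); last first.
  suff -> : HentU L (Uab Phi a b) = +oo%E by exact: leey.
  apply/eqP; rewrite eq_le leey /=.
  apply: le_trans (_ : Hent L pb <= _)%E; last by apply: ereal_sup_ubound; exists pb.
  apply/ereal_infP => _ [h' Hr <-].
  have [z [zZ Lz]] : exists z, z \in Z' /\ L (h' z.1) z.2 = +oo%E.
    apply: contrapT => H; apply: noh; exists h'; split => // z zZ; apply/negP => /eqP E.
    by apply: H; exists z.
  rewrite (@ell_pinfty R X Y L h' pb B z) //.
  - by case: Upb => -[].
  - by move=> z'; apply: ruleB.
  - exact: pbpos.
rewrite leNgt; apply/negP => Hlt.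
have HUB : (B%:E <= HentU L (Uab Phi a b))%E.
  apply: le_trans (_ : Hent L pb <= _)%E; last by apply: ereal_sup_ubound; exists pb.
  apply/ereal_infP => _ [h' Hr <-].
  have := @ell_ge R X Y L h' pb (fun=> B).
  rewrite -mulr_suml; case: Upb => -[pb0 ->] _; rewrite mul1r; apply => //.
  by move=> z; apply: ruleB.
have [r Er] : exists r, HentU L (Uab Phi a b) = r%:E.
  move: HUB Hlt; case: (HentU L (Uab Phi a b)) => [r| |] H1 H2.
  - by exists r.
  - by move: H2; rewrite ltNge leey.
  - by move: H1; rewrite leeNy_eq.
have [s1 [rs1 s1w]] : exists s1, r < s1 /\ (s1%:E < worst L (Uab Phi a b) h)%E.
  move: Hlt; rewrite Er; case: (worst L (Uab Phi a b) h) => [ww| |] //.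
  - by rewrite lte_fin => H; exists ((r + ww) / 2); rewrite lte_fin; split; lra.
  - by move=> _; exists (r + 1); split; [lra | exact: ltry].
have rB : B <= r by move: HUB; rewrite Er lee_fin.
pose K0 : set T4 := fun x => [/\ is_rule x.1.1.1,
   (forall z, z \in Z' -> L (x.1.1.1 z.1) z.2 != +oo%E) &
   (forall i, 0 <= x.1.2 i + x.1.1.2 i /\ 0 <= x.1.2 i - x.1.1.2 i)].
pose fF (o : option (X * Y)) (x : T4) : R :=
  if o is Some z then fine (L (x.1.1.1 z.1) z.2) - (\sum_(i < m) Phi z.1 z.2 i * x.1.1.2 i + x.2)
  else Fup x.1.1.2 x.1.2 x.2 - s1.
have finL : forall (h' : X -> Y -> R) z, is_rule h' -> L (h' z.1) z.2 != +oo%E ->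
    L (h' z.1) z.2 = (fine (L (h' z.1) z.2))%:E.
  by move=> h' z Hr Hf; rewrite fineK // fin_numE Hf Hninf.
have mixL : forall t x y z, 0 <= t -> t <= 1 -> K0 x -> K0 y -> z \in Z' ->
   L ((mix4 t x y).1.1.1 z.1) z.2 = (fine (L ((mix4 t x y).1.1.1 z.1) z.2))%:E /\
   fine (L ((mix4 t x y).1.1.1 z.1) z.2) <=
     t * fine (L (x.1.1.1 z.1) z.2) + (1 - t) * fine (L (y.1.1.1 z.1) z.2).
  move=> t x y z t0 t1 [rx fx _] [ry fy _] zZ.
  have := Hcvx z.2 (x.1.1.1 z.1) (y.1.1.1 z.1) t (rx z.1) (ry z.1).
  rewrite t0 t1 => /(_ isT).
  rewrite (finL _ z rx (fx z zZ)) (finL _ z ry (fy z zZ)) -!EFinM -EFinD => H.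
  apply: fin_le H; rewrite /=.
  have rm : is_dist (fun y' => t * x.1.1.1 z.1 y' + (1 - t) * y.1.1.1 z.1 y').
    have [dx1 dx2] := rx z.1; have [dy1 dy2] := ry z.1; split.
    - by move=> y'; apply: addr_ge0; apply: mulr_ge0 => //; lra.
    - by rewrite big_split /= -!mulr_sumr dx2 dy2; ring.
  exact: Hninf.
have Kmix : mixclosed _ _ mix4 K0.
  move=> t x y t0 t1 Kx Ky; have [rx fx cx] := Kx; have [ry fy cy] := Ky; split.
  - move=> x0; have [dx1 dx2] := rx x0; have [dy1 dy2] := ry x0; split.
    + by move=> y'; apply: addr_ge0; apply: mulr_ge0 => //; lra.
    + by rewrite big_split /= -!mulr_sumr dx2 dy2; ring.
  - move=> z zZ; have [E _] := mixL t x y z t0 t1 Kx Ky zZ.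
    by rewrite E.
  - move=> i /=; have [h1 h2] := cx i; have [h3 h4] := cy i.
    have k1 : 0 <= t * (x.1.2 i + x.1.1.2 i) by apply: mulr_ge0.
    have k2 : 0 <= (1 - t) * (y.1.2 i + y.1.1.2 i) by apply: mulr_ge0; lra.
    have k3 : 0 <= t * (x.1.2 i - x.1.1.2 i) by apply: mulr_ge0.
    have k4 : 0 <= (1 - t) * (y.1.2 i - y.1.1.2 i) by apply: mulr_ge0; lra.
    split; nra.
have linm : forall (c : 'I_m -> R) t x y,
  \sum_(i < m) c i * (mix4 t x y).1.1.2 i = t * \sum_(i < m) c i * x.1.1.2 i + (1 - t) * \sum_(i < m) c i * y.1.1.2 i.
  by move=> c t x y; rewrite !mulr_sumr -big_split; apply: eq_bigr => i _ /=; ring.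
have conv : forall o, o \in Sopt Z' -> convexon _ _ mix4 K0 (fF o).
  move=> o Ho t x y t0 t1 Kx Ky; case: o Ho => [z|] Ho.
    have zZ : z \in Z' by move: Ho; rewrite inE.
    have [_ H] := mixL t x y z t0 t1 Kx Ky zZ.
    rewrite /fF linm.
    have -> : (mix4 t x y).2 = t * x.2 + (1 - t) * y.2 by [].
    lra.
  change (Fup (mix4 t x y).1.1.2 (mix4 t x y).1.2 (mix4 t x y).2 - s1 <=
    t * (Fup x.1.1.2 x.1.2 x.2 - s1) + (1 - t) * (Fup y.1.1.2 y.1.2 y.2 - s1)).
  rewrite Fup_mix le_eqVlt; apply/orP; left; apply/eqP; ring.
have cover : forall x, K0 x -> exists2 o, o \in Sopt Z' & 0 <= fF o x.
  move=> x Kx; have [rx fx cx] := Kx.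
  have [[z [zZ Hz]]|nz] := pselect (exists z, z \in Z' /\ 0 <= fF (Some z) x).
    by exists (Some z) => //; rewrite inE.
  exists None; first by rewrite inE.
  have Hle : forall z, z \in Z' ->
      fine (L (x.1.1.1 z.1) z.2) <= \sum_(i < m) Phi z.1 z.2 i * x.1.1.2 i + x.2.
    move=> z zZ; rewrite leNgt; apply/negP => H; apply: nz; exists z; split => //.
    by rewrite /fF subr_ge0 ltW.
  pose c z := if z \in Z' then fine (L (x.1.1.1 z.1) z.2)
              else \sum_(i < m) Phi z.1 z.2 i * x.1.1.2 i + x.2.
  have Hwx : (worst L (Uab Phi a b) x.1.1.1 <= (Fup x.1.1.2 x.1.2 x.2)%:E)%E.
    apply/ereal_supP => _ [p Up <-].
    rewrite (@ell_real R X Y L x.1.1.1 p c).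
      rewrite lee_fin; apply: wd_up => // z.
      by rewrite /c; case: ifP => [/Hle|] //.
    move=> z pz; have zZ := Z'P z p Up pz; rewrite /c zZ.
    exact: finL (fx z zZ).
  have := lt_le_trans s1w (le_trans (Hh.2 _ rx) Hwx).
  by rewrite lte_fin /fF subr_ge0 => /ltW.
have [lam [l0 l1 lf]] := @fan R T4 mix4 _ _ (Sopt Z') fF K0 (card_Sopt Z') Kmix conv cover.
have sumZ : forall G : X * Y -> R, \sum_(z in Z') G z = \sum_(z : X * Y) (if z \in Z' then G z else 0).
  by move=> G; rewrite big_mkcond.
have lam0 : 0 < lam None.
  rewrite lt_def l0 andbT; apply/negP => /eqP L0.
  pose nu0 := \sum_(z : X * Y) `|fine (L (h0 z.1) z.2)| + 1.
  have K0x : K0 (((h0, fun=> 0), fun=> 0), nu0).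
    by split => // i /=; rewrite addr0 subr0.
  have := lf _ K0x; rewrite sumS L0 mul0r add0r.
  have : \sum_(z in Z') lam (Some z) * fF (Some z) (((h0, fun=> 0), fun=> 0), nu0) <=
         \sum_(z in Z') lam (Some z) * (-1).
    apply: ler_sum => z _; apply: ler_wpM2l => //=.
    rewrite big1 ?add0r => [|i _]; last exact: mulr0.
    have : `|fine (L (h0 z.1) z.2)| <= \sum_(z : X * Y) `|fine (L (h0 z.1) z.2)|.
      by rewrite (bigD1 z) //= lerDl; apply: sumr_ge0.
    have : fine (L (h0 z.1) z.2) <= `|fine (L (h0 z.1) z.2)| by apply: ler_norm.
    rewrite /nu0; lra.
  have -> : \sum_(z in Z') lam (Some z) * (-1) = -1.
    under eq_bigr do rewrite mulrN1.
    by rewrite sumrN; move: l1; rewrite sumS L0 add0r => ->.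
  lra.
pose p z := if z \in Z' then lam (Some z) / lam None else 0.
have keyI : forall x, K0 x -> 0 <= fF None x + \sum_(z : X * Y) p z * fF (Some z) x.
  move=> x Kx; have := lf _ Kx; rewrite sumS.
  have -> : \sum_(z in Z') lam (Some z) * fF (Some z) x =
            lam None * \sum_(z : X * Y) p z * fF (Some z) x.
    rewrite sumZ mulr_sumr; apply: eq_bigr => z _; rewrite /p.
    case: ifP => _; last by rewrite mul0r mulr0.
    by field; rewrite gt_eqF.
  by rewrite -mulrDr pmulr_rge0.
pose C (h' : X -> Y -> R) := \sum_(z : X * Y) p z * fine (L (h' z.1) z.2) - s1.
pose al i := 2^-1 * (b i + a i) - Ev Phi p i.
pose be i := 2^-1 * (b i - a i) : R.
pose ga := 1 - \sum_(z : X * Y) p z.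
have expand : forall x : T4, fF None x + \sum_(z : X * Y) p z * fF (Some z) x =
    C x.1.1.1 + \sum_(i < m) x.1.1.2 i * al i + \sum_(i < m) x.1.2 i * be i + x.2 * ga.
  move=> [[[h' mu] eta] nu] /=.
  have -> : \sum_(z : X * Y) p z * (fine (L (h' z.1) z.2) - (\sum_(i < m) Phi z.1 z.2 i * mu i + nu)) =
     \sum_(z : X * Y) p z * fine (L (h' z.1) z.2) - (\sum_(i < m) Ev Phi p i * mu i + nu * \sum_(z : X * Y) p z).
    under eq_bigr do rewrite mulrBr mulrDr.
    rewrite sumrB big_split /= sum_pPhi mulr_sumr; congr (_ - (_ + _)).
    by apply: eq_bigr => z _; ring.
  rewrite FupE.
  have E2 : \sum_(i < m) mu i * al i + \sum_(i < m) eta i * be i =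
     \sum_(i < m) (2^-1 * (b i + a i) * mu i + 2^-1 * (b i - a i) * eta i) -
     \sum_(i < m) Ev Phi p i * mu i.
    rewrite -big_split -sumrB; apply: eq_bigr => i _ /=; rewrite /al /be; ring.
  rewrite -[C h' + _ + _]addrA E2 /C /ga; ring.
have [ga0 Hab] := @extract R m (C h0) al be ga (fun mu eta nu Hc =>
   eq_ind _ (fun r => 0 <= r) (keyI (((h0, mu), eta), nu) (And3 r0 f0 Hc)) _
     (expand (((h0, mu), eta), nu))).
have p0' : forall z, 0 <= p z.
  by move=> z; rewrite /p; case: ifP => // _; apply: divr_ge0 => //; exact: ltW.
have Up : Uab Phi a b p.
  split; first split => //.
  - by move: ga0; rewrite /ga => /eqP; rewrite subr_eq0 => /eqP <-.
  - move=> i; have [h1 h2] := Hab i; rewrite /al /be in h1 h2.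
    by apply/andP; split; rewrite -/(Ev Phi p i); lra.
have Cpos : forall h' : X -> Y -> R, is_rule h' -> (forall z, z \in Z' -> L (h' z.1) z.2 != +oo%E) ->
    s1 <= \sum_(z : X * Y) p z * fine (L (h' z.1) z.2).
  move=> h' Hr Hf.
  have K0x : K0 (((h', fun=> 0), fun=> 0), 0) by split => // i /=; rewrite addr0 subr0.
  have := keyI _ K0x; rewrite expand /=.
  have -> : \sum_(i < m) 0 * al i = 0 by rewrite big1 // => i _; exact: mul0r.
  have -> : \sum_(i < m) 0 * be i = 0 by rewrite big1 // => i _; exact: mul0r.
  by rewrite mul0r !addr0 /C subr_ge0.
have sB : 0 < s1 - B by lra.
pose dl := (s1 - r) / (2 * (s1 - B)).
have d0 : 0 < dl by apply: divr_gt0; lra.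
have d1 : dl <= 1 by rewrite /dl ler_pdivrMr; lra.
have dE : dl * (s1 - B) = (s1 - r) / 2 by rewrite /dl; field; rewrite gt_eqF.
pose pd z := dl * pb z + (1 - dl) * p z.
have Upd : Uab Phi a b pd by apply: U_mix => //; rewrite (ltW d0) d1.
have pd0 : forall z, 0 <= pd z by case: Upd => -[].
have HE : (((s1 + r) / 2)%:E <= Hent L pd)%E.
  apply/ereal_infP => _ [h' Hr <-].
  have [[z [zZ Lz]]|nz] := pselect (exists z, z \in Z' /\ L (h' z.1) z.2 = +oo%E).
    rewrite (@ell_pinfty R X Y L h' pd B z) //; first exact: leey.
    - by move=> z'; apply: ruleB.
    - rewrite /pd; have := pbpos z zZ; have := p0' z.
      have k1 : 0 <= 1 - dl by lra.
      move=> h1 h2; have := mulr_ge0 k1 h1; have := mulr_gt0 d0 h2; lra.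
  have Hf : forall z, z \in Z' -> L (h' z.1) z.2 != +oo%E.
    by move=> z zZ; apply/negP => /eqP E; apply: nz; exists z.
  rewrite (@ell_real R X Y L h' pd (fun z => fine (L (h' z.1) z.2))); last first.
    move=> z pz; have zZ := Z'P z pd Upd pz; exact: finL (Hf z zZ).
  rewrite lee_fin.
  have -> : \sum_(z : X * Y) pd z * fine (L (h' z.1) z.2) =
    dl * \sum_(z : X * Y) pb z * fine (L (h' z.1) z.2) +
    (1 - dl) * \sum_(z : X * Y) p z * fine (L (h' z.1) z.2).
    by rewrite !mulr_sumr -big_split; apply: eq_bigr => z _ /=; rewrite /pd mulrDl !mulrA.
  have HpB : B <= \sum_(z : X * Y) pb z * fine (L (h' z.1) z.2).
    have [[pb0 pb1] _] := Upb.
    apply: le_trans (_ : \sum_(z : X * Y) pb z * B <= _).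
      by rewrite -mulr_suml pb1 mul1r.
    apply: ler_sum => z _; have [zZ|nzZ] := boolP (z \in Z').
      apply: ler_wpM2l => //; have := ruleB h' z Hr.
      by rewrite (finL h' z Hr (Hf z zZ)) lee_fin.
    by rewrite (nZ' z pb Upb nzZ) !mul0r.
  have Hps := Cpos h' Hr Hf.
  set X1 := \sum_(z : X * Y) pb z * _ in HpB *.
  set Y1 := \sum_(z : X * Y) p z * _ in Hps *.
  have k1 : 0 <= dl * (X1 - B) by apply: mulr_ge0; lra.
  have k2 : 0 <= (1 - dl) * (Y1 - s1) by apply: mulr_ge0; lra.
  nra.
have : (Hent L pd <= r%:E)%E by rewrite -Er; apply: ereal_sup_ubound; exists pd.
move=> H2; have := le_trans HE H2; rewrite lee_fin; lra.
Qed.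

End Part1b.

Unset Implicit Arguments.

Theorem theorem3 (R : realType) (X Y : finType) (m : nat)
  (HX : (0 < #|X|)%N) (HY : (0 < #|Y|)%N)
  (L : (Y -> R) -> Y -> \bar R) (HL : score_function L)
  (Phi : X -> Y -> 'I_m -> R) (a b : 'I_m -> R)
  (HU : Uab Phi a b !=set0)
  (h : X -> Y -> R) (Hh : is_MRC L (Uab Phi a b) h)
  (Rlow : R) (HRlow : is_lp_max Phi L h a b Rlow)
  (pstar : X * Y -> R) (Hp : Uab Phi a b pstar) :
  ((Rlow%:E <= ell L h pstar)%E /\ (ell L h pstar <= HentU L (Uab Phi a b))%E)
  /\ ((forall p, Uab Phi a b p -> (Hent L p <= Hent L pstar)%E) ->
        ell L h pstar = HentU L (Uab Phi a b))
  /\ ((forall p, Uab Phi a b p -> (ell L h pstar <= ell L h p)%E) ->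
        ell L h pstar = Rlow%:E).
Proof.
have P1a : (Rlow%:E <= ell L h pstar)%E.
  have [[mu [eta [nu [[Hf Hc] Eobj]]]] _] := HRlow.
  have [[ps0 _] _] := Hp.
  apply: le_trans (@ell_ge R X Y L h pstar (fun z => \sum_(i < m) Phi z.1 z.2 i * mu i + nu) ps0 (fun z => Hf z.1 z.2)).
  rewrite lee_fin -Eobj; apply: (@wd R X Y m Phi a b pstar Hp mu eta nu) => //.
have P1b : (ell L h pstar <= HentU L (Uab Phi a b))%E.
  apply: le_trans (@minimax R X Y m Phi a b L HL HX HY HU h Hh).
  by apply: ereal_sup_ubound; exists pstar.
split; first by split.
split.
  move=> Hmax; apply/eqP; rewrite eq_le P1b /=.
  apply: le_trans (_ : Hent L pstar <= _)%E.
    by apply: ge_ereal_sup => _ [p Up <-]; exact: Hmax.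
  by apply: ereal_inf_lbound; exists h => //; exact: Hh.1.
move=> Hmin; apply/eqP; rewrite eq_le P1a andbT.
exact: (@part3 R X Y m Phi a b L HL h Hh.1 Rlow HRlow pstar Hmin).
Qed.
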